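(* For all integers $n\ge1$ the following hold in $\mathbb V$: $$\sum_{k=0}^n G_k\star\tilde G_{n-k}\,q^{n-2k}=q\sum_{k=0}^{n-1}W_{-k}\star W_{n-k}\,q^{n-1-2k}=[2]_q^{n-1}(xy+yx)^{n-1}(qxy+q^{-1}yx),$$ $$\sum_{k=0}^n G_k\star\tilde G_{n-k}\,q^{2k-n}=q\sum_{k=0}^{n-1}W_{n-k}\star W_{-k}\,q^{n-1-2k}=[2]_q^{n-1}(q^{-1}xy+qyx)(xy+yx)^{n-1},$$ $$\sum_{k=0}^n \tilde G_k\star G_{n-k}\,q^{n-2k}=q\sum_{k=0}^{n-1}W_{n-k}\star W_{-k}\,q^{2k+1-n}=[2]_q^{n-1}(xy+yx)^{n-1}(q^{-1}xy+qyx),$$ $$\sum_{k=0}^n \tilde G_k\star G_{n-k}\,q^{2k-n}=q\sum_{k=0}^{n-1}W_{-k}\star W_{n-k}\,q^{2k+1-n}=[2]_q^{n-1}(qxy+q^{-1}yx)(xy+yx)^{n-1}.$$ On the right-hand sides, products and powers are taken in the free (concatenation) product.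
   Context: Let $\mathbb F$ be a field and let $q\in\mathbb F$ be nonzero and not a root of unity. Let $[m]_q=(q^m-q^{-m})/(q-q^{-1})$. Let $\mathbb V$ be the free associative $\mathbb F$-algebra on noncommuting $x,y$, with basis the words (including $1$). Juxtaposition denotes concatenation. Set $\langle x,x\rangle=\langle y,y\rangle=2$ and $\langle x,y\rangle=\langle y,x\rangle=-2$. The $q$-shuffle product $\star$ is the bilinear product determined as follows: - $1\star v=v\star 1=v$; - for nontrivial words $u=u_1\cdots u_r$ and $v=v_1\cdots v_s$, $$u\star v=u_1((u_2\cdots u_r)\star v)+v_1(u\star(v_2\cdots v_s))q^{\langle u_1,v_1\rangle+\cdots+\langle u_r,v_1\rangle}.$$ This makes $\mathbb V$ an associative algebra, the $q$-shuffle algebra. For $k\in\mathbb N$: - $W_{-k}=xyx\cdots x$ is the alternating word of length $2k+1$ beginning and ending with $x$; - $W_{k+1}=yxy\cdots y$ is the alternating word of length $2k+1$ beginning and ending with $y$; - $G_k=yxyx\cdots yx$ is the word of length $2k$; - $\tilde G_k=xyxy\cdots xy$ is the word of length $2k$; - $G_0=\tilde G_0=1$. *)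

(* Defs.v *)
From mathcomp Require Import all_boot all_algebra.
Set Implicit Arguments. Unset Strict Implicit. Unset Printing Implicit Defensive.
Import GRing.Theory.
Local Open Scope ring_scope.

(* The free algebra V on x, y over a field F.  A word is a seq bool (the empty word is 1).
   An element of V is represented by a formal linear combination of words
   (a list of (coefficient, word) pairs); two representations denote the same
   element of V iff all their word-coefficients agree ([eqV]). *)

Definition word := seq bool.
Definition lx : bool := true.
Definition ly : bool := false.

Definition V (F : fieldType) := seq (F * word).

Definition coef (F : fieldType) (v : V F) (w : word) : F :=
  \sum_(p <- v) (if p.2 == w then p.1 else 0).

Definition eqV (F : fieldType) (a b : V F) : Prop := forall w, coef a w = coef b w.

Definition vzero (F : fieldType) : V F := [::].
Definition vadd (F : fieldType) (a b : V F) : V F := a ++ b.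
Definition vscale (F : fieldType) (c : F) (a : V F) : V F :=
  [seq (c * p.1, p.2) | p <- a].
Definition vword (F : fieldType) (w : word) : V F := [:: (1, w)].

Definition vconcat (F : fieldType) (a b : V F) : V F :=
  [seq (p.1 * r.1, p.2 ++ r.2) | p <- a, r <- b].
Definition vpow (F : fieldType) (a : V F) (n : nat) : V F :=
  iter n (vconcat a) (vword F [::]).

Definition pairing (a b : bool) : int := if a == b then Posz 2 else - Posz 2.

Fixpoint wshuffle (F : fieldType) (q : F) (u : word) {struct u} : word -> V F :=
  fix wsh (v : word) : V F :=
  match u, v with
  | [::], _ => vword F v
  | _, [::] => vword F u
  | u1 :: u', v1 :: v' =>
      vadd (vconcat (vword F [:: u1]) (wshuffle q u' v))
           (vscale (q ^ (\sum_(a <- u) pairing a v1))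
                   (vconcat (vword F [:: v1]) (wsh v')))
  end.

Definition vshuffle (F : fieldType) (q : F) (a b : V F) : V F :=
  flatten [seq vscale (p.1 * r.1) (wshuffle q p.2 r.2) | p <- a, r <- b].

Definition qint (F : fieldType) (q : F) (m : int) : F :=
  (q ^ m - q ^ (- m)) / (q - q^-1).

Fixpoint alt (n : nat) (b : bool) : word :=
  if n is n'.+1 then b :: alt n' (~~ b) else [::].

(* W_{-k} = xyx...x, length 2k+1 *)
Definition Wm (k : nat) : word := alt k.*2.+1 lx.
(* W_{k} for k >= 1 : yxy...y, length 2k-1 *)
Definition Wp (k : nat) : word := alt k.*2.-1 ly.
Definition G (k : nat) : word := alt k.*2 ly.
Definition Gt (k : nat) : word := alt k.*2 lx.

Definition vsum (F : fieldType) (n : nat) (f : nat -> V F) : V F :=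
  \big[@vadd F/vzero F]_(0 <= k < n) f k.

Definition xy := [:: lx; ly].
Definition yx := [:: ly; lx].
Definition vxyyx (F : fieldType) : V F := vadd (vword F xy) (vword F yx).
Definition vlin (F : fieldType) (a b : F) : V F :=
  vadd (vscale a (vword F xy)) (vscale b (vword F yx)).

(* Main.v *)
Require Import Defs.
From mathcomp Require Import all_boot all_algebra.
From mathcomp Require Import zify ring.
Import GRing.Theory.
Local Open Scope ring_scope.

Section Basic.
Variable F : fieldType.
Implicit Types a b : V F.

Lemma coef_nil w : coef (vzero F) w = 0.
Proof. by rewrite /coef big_nil. Qed.
Lemma coef_add a b w : coef (vadd a b) w = coef a w + coef b w.
Proof. by rewrite /coef /vadd big_cat. Qed.
Lemma coef_scale c a w : coef (vscale c a) w = c * coef a w.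
Proof.
rewrite /coef /vscale big_map mulr_sumr; apply: eq_bigr => p _ /=.
by case: ifP; rewrite ?mulr0.
Qed.
Lemma coef_word u w : coef (vword F u) w = if u == w then 1 else 0.
Proof. by rewrite /coef big_seq1. Qed.
Lemma coef_vsum n (f : nat -> V F) w : coef (vsum n f) w = \sum_(0 <= k < n) coef (f k) w.
Proof.
rewrite /vsum; apply: (big_morph (fun a => coef a w)).
- by move=> a b; rewrite coef_add.
- by rewrite coef_nil.
Qed.

Definition pref (u : word) b w := \sum_(r <- b) (if u ++ r.2 == w then r.1 else 0).
Lemma pref_nil b w : pref [::] b w = coef b w.
Proof. by []. Qed.
Lemma pref_cons_nil c u b : pref (c :: u) b [::] = 0.
Proof. by rewrite /pref big1. Qed.
Lemma pref_cons c u b d w : pref (c :: u) b (d :: w) = if c == d then pref u b w else 0.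
Proof.
rewrite /pref; case: eqP => [->|ne].
  by apply: eq_bigr => r _; rewrite /= eqseq_cons eqxx.
by rewrite big1 // => r _; rewrite /= eqseq_cons; case: eqP.
Qed.

Lemma coef_concat_cons p a b w :
  coef (vconcat (p :: a) b) w = p.1 * pref p.2 b w + coef (vconcat a b) w.
Proof.
rewrite /coef /vconcat /= big_cat big_map /pref mulr_sumr; congr (_ + _).
by apply: eq_bigr => r _ /=; case: ifP; rewrite ?mulr0.
Qed.
Lemma coef_concat_nil b w : coef (vconcat [::] b) w = 0.
Proof. by rewrite /coef big_nil. Qed.

Lemma coef_concat a b w : coef (vconcat a b) w =
  \sum_(p <- a) \sum_(r <- b) (if p.2 ++ r.2 == w then p.1 * r.1 else 0).
Proof.
elim: a => [|p a IH]; first by rewrite coef_concat_nil big_nil.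
rewrite coef_concat_cons IH big_cons /pref mulr_sumr; congr (_ + _).
by apply: eq_bigr => r _; case: ifP; rewrite ?mulr0.
Qed.

Lemma coef_concatA a b c w :
  coef (vconcat (vconcat a b) c) w = coef (vconcat a (vconcat b c)) w.
Proof.
rewrite !coef_concat /vconcat big_allpairs_dep; apply: eq_bigr => p _.
rewrite big_allpairs_dep; apply: eq_bigr => r _; apply: eq_bigr => s _ /=.
by rewrite catA mulrA.
Qed.

Definition X := vxyyx F.
Lemma coef_concatX b c d w : coef (vconcat X b) (c :: d :: w) =
  if c != d then coef b w else 0.
Proof.
rewrite /X /vxyyx /vadd /vword /= !coef_concat_cons coef_concat_nil /=.
rewrite !pref_cons /xy /yx /lx /ly; case: c; case: d => /=;
by rewrite ?mul1r ?addr0 ?add0r.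
Qed.
Lemma coef_concatX0 b : coef (vconcat X b) [::] = 0.
Proof.
rewrite /X /vxyyx /vadd /vword /= !coef_concat_cons coef_concat_nil /=.
by rewrite !pref_cons_nil !mulr0 !addr0.
Qed.
Lemma coef_concatX1 b c : coef (vconcat X b) [:: c] = 0.
Proof.
rewrite /X /vxyyx /vadd /vword /= !coef_concat_cons coef_concat_nil /=.
by rewrite !pref_cons !pref_cons_nil; case: c => /=; rewrite !mulr0 !addr0.
Qed.
End Basic.


Section Shuf.
Variable F : fieldType.
Variable q : F.

Definition S u v w := coef (wshuffle q u v) w.

Lemma S_nil_l v w : S [::] v w = if v == w then 1 else 0.
Proof. by case: v => [|b v]; rewrite /S /= coef_word. Qed.
Lemma S_nil_r u w : S u [::] w = if u == w then 1 else 0.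
Proof. by case: u => [|a u]; rewrite /S /= coef_word. Qed.

Lemma S_cons a u b v c w : S (a :: u) (b :: v) (c :: w) =
  (if a == c then S u (b :: v) w else 0) +
  (if b == c then q ^ (\sum_(t <- a :: u) pairing t b) * S (a :: u) v w else 0).
Proof.
rewrite /S /= coef_add coef_scale; congr (_ + _).
  by rewrite /vword coef_concat_cons coef_concat_nil addr0 pref_cons mul1r pref_nil.
rewrite /vword coef_concat_cons coef_concat_nil addr0 pref_cons mul1r pref_nil.
by case: ifP; rewrite ?mulr0.
Qed.

Lemma S_cons_nil a u b v : S (a :: u) (b :: v) [::] = 0.
Proof.
rewrite /S /= coef_add coef_scale.
by rewrite /vword !coef_concat_cons !coef_concat_nil /= !pref_cons_nil !(mulr0, addr0).
Qed.

Lemma S_size u v w : size w != (size u + size v)%N -> S u v w = 0.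
Proof.
elim: u v w => [|a u IHu] v w.
  by rewrite S_nil_l; case: (v =P w) => // ->; rewrite eqxx.
elim: v w => [|b v IHv] w.
  by rewrite S_nil_r addn0; case: (a :: u =P w) => // ->; rewrite eqxx.
case: w => [|c w] hs; first by rewrite S_cons_nil.
rewrite S_cons IHu ?IHv; first by rewrite mulr0 !if_same addr0.
- by move: hs => /=; rewrite addnS.
- by move: hs => /=.
Qed.

Definition sig (w : word) : word := map negb w.

Lemma pairingN a b : pairing (~~ a) (~~ b) = pairing a b.
Proof. by case: a; case: b. Qed.

Lemma S_sig u v w : S (sig u) (sig v) (sig w) = S u v w.
Proof.
elim: u v w => [|a u IHu] v w.
  by rewrite /sig S_nil_l S_nil_l (inj_eq (inj_map negb_inj)).
elim: v w => [|b v IHv] w.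
  by rewrite /sig S_nil_r S_nil_r (inj_eq (inj_map negb_inj)).
case: w => [|c w]; first by rewrite /sig /= !S_cons_nil.
rewrite /sig /= S_cons S_cons (inj_eq negb_inj) (inj_eq negb_inj).
have := IHu (b :: v) w; rewrite /sig /= => ->.
have := IHv w; rewrite /sig /= => ->.
have -> : \sum_(t <- ~~ a :: [seq ~~ i | i <- u]) pairing t (~~ b) = \sum_(t <- a :: u) pairing t b.
  by rewrite -map_cons big_map; apply: eq_bigr => t _; rewrite pairingN.
by [].
Qed.

Lemma pair_alt n b c : \sum_(t <- alt n b) pairing t c = if odd n then pairing b c else 0.
Proof.
elim: n b => [|n IH] b; first by rewrite big_nil.
rewrite /= big_cons IH; case: (odd n) => /=; last by rewrite addr0.
by clear IH; case: b; case: c.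
Qed.

Lemma sig_alt n b : sig (alt n b) = alt n (~~ b).
Proof. by rewrite /sig; elim: n b => [|n IH] b //=; rewrite IH. Qed.

End Shuf.
Arguments S {F}.


Lemma G_S k : G k.+1 = ly :: Wm k.
Proof. by rewrite /G /Wm doubleS. Qed.
Lemma Wm_S k : Wm k = lx :: G k.
Proof. by []. Qed.
Lemma Gt_S k : Gt k.+1 = lx :: Wp k.+1.
Proof. by rewrite /Gt /Wp doubleS. Qed.
Lemma Wp_S k : Wp k.+1 = ly :: Gt k.
Proof. by rewrite /Gt /Wp doubleS. Qed.
Lemma G0 : G 0 = [::]. Proof. by []. Qed.
Lemma Gt0 : Gt 0 = [::]. Proof. by []. Qed.
Lemma pG k c : \sum_(t <- G k) pairing t c = 0.
Proof. by rewrite /G pair_alt odd_double. Qed.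
Lemma pGt k c : \sum_(t <- Gt k) pairing t c = 0.
Proof. by rewrite /Gt pair_alt odd_double. Qed.

Arguments G : simpl never.
Arguments Gt : simpl never.
Arguments Wm : simpl never.
Arguments Wp : simpl never.
Section Terms.
Variable F : fieldType.
Variable q : F.

Definition GG k m w := S q (G k) (Gt m) w.
Definition WW k m w := S q (Wm k) (Wp m) w.

Ltac unf := rewrite /GG /WW ?(G_S, Gt_S, Wp_S, Wm_S, G0, Gt0).

Lemma GG_cd k m c d w : GG k m (c :: d :: w) =
  if c then (if d then 0 else
     if m is m'.+1 then (if k is k'.+1 then WW k' m w else 0) + GG k m' w else 0)
  else (if d then
     (if k is k'.+1 then GG k' m w + (if m is _.+1 then q ^ 2%:Z * WW k' m w else 0) else 0)
    else 0).
Proof.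
case: k => [|k]; case: m => [|m]; unf; case: c; case: d;
rewrite ?S_nil_l ?S_nil_r ?S_cons ?S_nil_l ?S_nil_r ?S_cons /= ?eqseq_cons /= ?big_cons ?big_nil ?pG ?pGt /= ?(add0r, addr0, mulr0, mul0r, mul1r).
all: by rewrite /pairing.
Qed.

Lemma WW_cd k m c d w : WW k m.+1 (c :: d :: w) =
  if c then (if d then 0 else
     (if k is k'.+1 then WW k' m.+1 w else 0) + GG k m w)
  else (if d then
     q ^ (- 2%:Z) * (GG k m w + (if m is _.+1 then q ^ 2%:Z * WW k m w else 0))
    else 0).
Proof.
case: k => [|k]; case: m => [|m]; unf; case: c; case: d;
rewrite ?S_nil_l ?S_nil_r ?S_cons ?S_nil_l ?S_nil_r ?S_cons /= ?eqseq_cons /= ?big_cons ?big_nil ?pG ?pGt /= ?(add0r, addr0, mulr0, mul0r, mul1r).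
all: by rewrite /pairing.
Qed.

End Terms.
Arguments GG {F}.
Arguments WW {F}.


Arguments G : simpl never.
Arguments Gt : simpl never.
Arguments Wm : simpl never.
Arguments Wp : simpl never.

Section Sums.
Variable F : fieldType.
Variable q : F.
Hypothesis hq0 : q != 0.
Variable t : F.
Hypothesis ht0 : t != 0.

Definition GA n w := \sum_(0 <= k < n.+1) t ^ (n%:Z - (2*k)%:Z) * GG q k (n - k) w.
Definition GB n w := \sum_(0 <= k < n) t ^ (n%:Z - (2*k)%:Z) * WW q k (n - k) w.

Lemma texp (a b c : int) : a = b + c -> t ^ a = t ^ b * t ^ c.
Proof. by move=> ->; rewrite expfzDr. Qed.

Lemma GA_xy n w : GA n.+1 (lx :: ly :: w) = t^-1 * GB n w + t * GA n w.
Proof.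
rewrite /GA big_nat_recr //= subnn GG_cd /= mulr0 addr0.
rewrite (@eq_big_nat _ _ _ 0 n.+1 _ (fun k => t ^ (n.+1%:Z - (2 * k)%:Z) *
   ((if k is k'.+1 then WW q k' (n - k') w else 0) + GG q k (n - k) w))); last first.
  move=> k /andP[_ hk]; rewrite subSn // GG_cd /=; congr (_ * (_ + _)).
  by case: k hk => // k hk; rewrite -subSn.
under eq_bigr => k _ do rewrite mulrDr.
rewrite big_split /= big_nat_recl //= mulr0 add0r; congr (_ + _).
  rewrite /GB mulr_sumr; apply: eq_big_nat => k /andP[_ hk].
  rewrite mulrA -exprN1 -expfzDr //; congr (t ^ _ * _); lia.
rewrite mulr_sumr; apply: eq_big_nat => k /andP[_ hk].
rewrite mulrA -{2}(expr1z t) -expfzDr //; congr (t ^ _ * _); lia.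
Qed.

Lemma GA_yx n w : GA n.+1 (ly :: lx :: w) = t^-1 * GA n w + q ^ 2%:Z * t^-1 * GB n w.
Proof.
rewrite /GA big_nat_recl //= GG_cd /= mulr0 add0r.
under eq_bigr => k _ do rewrite GG_cd /= subSS mulrDr.
rewrite big_split /=; congr (_ + _).
  rewrite mulr_sumr; apply: eq_big_nat => k /andP[_ hk].
  rewrite mulrA -exprN1 -expfzDr //; congr (t ^ _ * _); lia.
rewrite big_nat_recr //= subnn mulr0 addr0 /GB !mulr_sumr.
apply: eq_big_nat => k /andP[_ hk].
rewrite -(subnSK hk) /= subnSK //.
rewrite (@texp _ (-1) (n%:Z - (2*k)%:Z)); last lia.
rewrite exprN1; ring.
Qed.

Lemma GB_xy n w : GB n.+1 (lx :: ly :: w) = t^-1 * GB n w + t * GA n w.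
Proof.
rewrite /GB.
rewrite (@eq_big_nat _ _ _ 0 n.+1 _ (fun k => t ^ (n.+1%:Z - (2 * k)%:Z) *
   ((if k is k'.+1 then WW q k' (n - k') w else 0) + GG q k (n - k) w))); last first.
  move=> k /andP[_ hk]; rewrite subSn // WW_cd /=; congr (_ * (_ + _)).
  by case: k hk => // k hk; rewrite -subSn.
under eq_bigr => k _ do rewrite mulrDr.
rewrite big_split /= big_nat_recl //= mulr0 add0r; congr (_ + _).
  rewrite mulr_sumr; apply: eq_big_nat => k /andP[_ hk].
  rewrite mulrA -exprN1 -expfzDr //; congr (t ^ _ * _); lia.
rewrite /GA mulr_sumr; apply: eq_big_nat => k /andP[_ hk].
rewrite mulrA -{2}(expr1z t) -expfzDr //; congr (t ^ _ * _); lia.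
Qed.

Lemma GB_yx n w : GB n.+1 (ly :: lx :: w) = q ^ (- 2%:Z) * t * GA n w + t * GB n w.
Proof.
rewrite /GB.
rewrite (@eq_big_nat _ _ _ 0 n.+1 _ (fun k => t ^ (n.+1%:Z - (2 * k)%:Z) *
   (q ^ (- 2%:Z) * (GG q k (n - k) w + (if (n - k)%N is _.+1 then q ^ 2%:Z * WW q k (n - k) w else 0))))); last first.
  by move=> k /andP[_ hk]; rewrite subSn // WW_cd.
under eq_bigr => k _ do rewrite mulrDr mulrDr.
rewrite big_split /=; congr (_ + _).
  rewrite /GA !mulr_sumr; apply: eq_big_nat => k /andP[_ hk].
  rewrite (@texp _ 1 (n%:Z - (2*k)%:Z)); last lia.
  rewrite expr1z; ring.
rewrite big_nat_recr //= subnn mulr0 mulr0 addr0 mulr_sumr.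
apply: eq_big_nat => k /andP[_ hk].
rewrite -(subnSK hk) /= subnSK //.
rewrite (@texp _ 1 (n%:Z - (2*k)%:Z)); last lia.
rewrite expr1z (mulrA (q ^ (- 2%:Z))) -expfzDr // addNr expr0z mul1r; ring.
Qed.

Lemma size_alt n b : size (alt n b) = n.
Proof. by elim: n b => //= n IH b; rewrite IH. Qed.

Lemma GA_cc n c w : GA n.+1 (c :: c :: w) = 0.
Proof. by rewrite /GA big1 // => k _; rewrite GG_cd; case: c; rewrite mulr0. Qed.
Lemma GB_cc n c w : GB n.+1 (c :: c :: w) = 0.
Proof.
rewrite /GB big_nat_cond big1 // => k /andP[/andP[_ hk] _]; rewrite subSn // WW_cd.
by case: c; rewrite mulr0.
Qed.
Lemma GA_short n w : (size w < 2)%N -> GA n.+1 w = 0.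
Proof.
move=> hw; rewrite /GA big1 // => k _; rewrite /GG S_size ?mulr0 //.
rewrite /G /Gt !size_alt -!muln2; apply/eqP; lia.
Qed.
Lemma GB_short n w : (size w < 2)%N -> GB n.+1 w = 0.
Proof.
move=> hw; rewrite /GB big_nat_cond big1 // => k /andP[/andP[_ hk] _]; rewrite /WW S_size ?mulr0 //.
rewrite /Wm /Wp !size_alt -!muln2; apply/eqP; lia.
Qed.
Lemma GA0 w : GA 0 w = if w == [::] then 1 else 0.
Proof.
rewrite /GA big_nat1 /GG /G /Gt /= S_nil_l mul1r.
by case: w.
Qed.
Lemma GB0 w : GB 0 w = 0.
Proof. by rewrite /GB big_geq. Qed.

End Sums.


Section Targ.
Variable F : fieldType.

Definition P m w := coef (vpow (X F) m) w.
Definition Q m (b : V F) w := coef (vconcat (vpow (X F) m) b) w.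

Lemma P0 w : P 0 w = if w == [::] then 1 else 0.
Proof. by rewrite /P /= coef_word; case: w. Qed.
Lemma PS m c d w : P m.+1 (c :: d :: w) = if c != d then P m w else 0.
Proof. by rewrite /P /= coef_concatX. Qed.
Lemma P_short m w : (size w < 2)%N -> P m.+1 w = 0.
Proof.
by case: w => [|c [|d w]] // _; rewrite /P /= ?coef_concatX0 ?coef_concatX1.
Qed.
Lemma Q0 b w : Q 0 b w = coef b w.
Proof. by rewrite /Q /= /vword coef_concat_cons coef_concat_nil addr0 mul1r pref_nil. Qed.
Lemma QS m b c d w : Q m.+1 b (c :: d :: w) = if c != d then Q m b w else 0.
Proof. by rewrite /Q /= coef_concatA coef_concatX. Qed.
Lemma Q_short m b w : (size w < 2)%N -> Q m.+1 b w = 0.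
Proof.
by case: w => [|c [|d w]] // _; rewrite /Q /= coef_concatA ?coef_concatX0 ?coef_concatX1.
Qed.

Lemma coefL (a b : F) c d w : coef (vlin a b) (c :: d :: w) =
  (if c then (if d then 0 else a) else (if d then b else 0)) * (if w == [::] then 1 else 0).
Proof.
rewrite /vlin /vadd /vscale /vword /coef /= big_cons big_cons big_nil /xy /yx /lx /ly.
by rewrite !eqseq_cons; case: c; case: d => /=; case: w => [|e w] /=;
  rewrite ?mulr1 ?mulr0 ?addr0 ?add0r.
Qed.
Lemma coefL_short (a b : F) w : (size w < 2)%N -> coef (vlin a b) w = 0.
Proof.
case: w => [|c [|d w]] // _; rewrite /vlin /vadd /vscale /vword /coef /=.
all: by rewrite !big_cons big_nil /xy /yx /= ?eqseq_cons ?andbF ?addr0.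
Qed.

Lemma LP (a b : F) m c d w : coef (vconcat (vlin a b) (vpow (X F) m)) (c :: d :: w) =
  (if c then (if d then 0 else a) else (if d then b else 0)) * P m w.
Proof.
rewrite /vlin /vadd /vscale /vword /= !coef_concat_cons coef_concat_nil /=.
rewrite !pref_cons !pref_nil /xy /yx /lx /ly /P.
by case: c; case: d => /=; rewrite ?mulr1 ?mulr0 ?mul0r ?addr0 ?add0r.
Qed.
Lemma LP_short (a b : F) m w : (size w < 2)%N -> coef (vconcat (vlin a b) (vpow (X F) m)) w = 0.
Proof.
case: w => [|c [|d w]] // _;
rewrite /vlin /vadd /vscale /vword /= !coef_concat_cons coef_concat_nil /=.
  by rewrite !pref_cons_nil !mulr0 !addr0.
by rewrite !pref_cons /xy /yx !pref_cons_nil; case: c; rewrite !mulr0 !addr0.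
Qed.

Lemma P_sig m w : P m (sig w) = P m w.
Proof.
elim: m w => [|m IH] w; first by rewrite !P0; case: w.
case: w => [|c [|d w]]; try by rewrite /sig /= !P_short.
by rewrite /sig /= !PS -/(sig w) IH (inj_eq negb_inj).
Qed.
Lemma Q_sig m (a b : F) w : Q m (vlin a b) (sig w) = Q m (vlin b a) w.
Proof.
elim: m w => [|m IH] w.
  rewrite !Q0; case: w => [|c [|d w]]; try by rewrite /sig /= !coefL_short.
  by rewrite /sig /= !coefL -/(sig w); case: c; case: d; case: w.
case: w => [|c [|d w]]; try by rewrite /sig /= !Q_short.
by rewrite !QS -/(sig w) IH (inj_eq negb_inj).
Qed.
Lemma LP_sig m (a b : F) w : coef (vconcat (vlin a b) (vpow (X F) m)) (sig w) =
  coef (vconcat (vlin b a) (vpow (X F) m)) w.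
Proof.
case: w => [|c [|d w]]; try by rewrite /sig /= !LP_short.
by rewrite !LP -/(sig w) P_sig; case: c; case: d.
Qed.

Lemma qint2 (q : F) : q != 0 -> q ^+ 2 != 1 -> qint q 2 = q + q^-1.
Proof.
move=> q0 h.
rewrite /qint.
have hd : q - q^-1 != 0.
  apply/eqP => /eqP; rewrite subr_eq0 => /eqP e; move: h.
  by rewrite expr2 {2}e divff // eqxx.
apply: (mulIf hd); rewrite divfK //.
have -> : q ^ 2%:Z = q ^+ 2 by [].
have -> : q ^ (- 2%:Z) = (q ^+ 2)^-1 by [].
by field.
Qed.
End Targ.


Arguments G : simpl never.
Arguments Gt : simpl never.
Arguments Wm : simpl never.
Arguments Wp : simpl never.


Section Main.
Variable F : fieldType.
Variable q : F.
Hypothesis hq0 : q != 0.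
Let hqi : q^-1 != 0. Proof. by rewrite invr_eq0. Qed.

Lemma qm2 : q ^ (- 2%:Z) = q^-1 * q^-1.
Proof. by rewrite -invfM. Qed.
Lemma qp2 : q ^ 2%:Z = q * q.
Proof. by []. Qed.

Definition T1 m w := (q + q^-1) ^+ m * Q F m (vlin q q^-1) w.

Lemma line1 m w : GA F q q m.+1 w = T1 m w /\ GB F q q m.+1 w = T1 m w.
Proof.
elim: m w => [|m IH] w.
  case: w => [|c [|d w]]; try by split; rewrite ?GA_short ?GB_short // /T1 ?Q_short ?Q0 ?coefL_short ?mulr0.
  rewrite /T1 Q0 coefL expr0 mul1r.
  case: c; case: d; rewrite ?GA_cc ?GB_cc ?GA_xy ?GB_xy ?GA_yx ?GB_yx // ?GA0 ?GB0
    ?qm2 ?qp2; case: (w == [::]); split; by field.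
case: w => [|c [|d w]]; try by split; rewrite ?GA_short ?GB_short // /T1 ?Q_short ?Q0 ?coefL_short ?mulr0.
rewrite /T1 QS; case: c; case: d; rewrite ?GA_cc ?GB_cc ?mulr0 //=
  ?GA_xy ?GB_xy ?GA_yx ?GB_yx //; case: (IH w) => -> ->. all: rewrite /T1 ?qm2 ?qp2.
all: split. all: rewrite exprS; move: (Q F m _ w) => z; by field.
Qed.

Definition T2 m w := (q + q^-1) ^+ m * coef (vconcat (vlin q^-1 q) (vpow (X F) m)) w.
Definition T4 m w := (q + q^-1) ^+ m * coef (vconcat (vlin q q^-1) (vpow (X F) m)) w.

Lemma sumT m w : coef (vconcat (vlin q^-1 q) (vpow (X F) m)) w +
  coef (vconcat (vlin q q^-1) (vpow (X F) m)) w = (q + q^-1) * P F m.+1 w.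
Proof.
case: w => [|c [|d w]]; try by rewrite !LP_short // P_short // addr0 mulr0.
by rewrite !LP PS; case: c; case: d => /=; rewrite ?mulr0 ?mul0r ?addr0 // -mulrDl addrC.
Qed.

Lemma line24 m w : GA F q q^-1 m.+1 w = T2 m w /\ q * q * GB F q q^-1 m.+1 w = T4 m w.
Proof.
elim: m w => [|m IH] w.
{ case: w => [|c [|d w]]; try by split; rewrite ?GA_short ?GB_short ?mulr0 // /T2 /T4 ?LP_short ?mulr0.
  rewrite /T2 /T4 !LP expr0 !mul1r P0.
  case: c; case: d; rewrite ?GA_cc ?GB_cc // ?GA_xy ?GB_xy ?GA_yx ?GB_yx // ?GA0 ?GB0 ?qm2 ?qp2.
  all: case: (w == [::]); split; rewrite ?invrK; by field. }
case: w => [|c [|d w]]; try by split; rewrite ?GA_short ?GB_short ?mulr0 // /T2 /T4 ?LP_short ?mulr0.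
have [hA hB] := IH w.
have eB : GB F q q^-1 m.+1 w = (q * q)^-1 * T4 m w by rewrite -hB; field.
have hs := sumT m w.
move: hs; rewrite /T2 /T4 in hA eB * => hs.
rewrite !LP; case: c; case: d; rewrite ?GA_cc ?GB_cc ?mulr0 ?mul0r //=
  ?GA_xy ?GB_xy ?GA_yx ?GB_yx //.
all: try by split; rewrite mulr0.
all: rewrite hA eB.
all: move: hs; set e1 := coef _ w; set e2 := coef _ w; move: (P F m.+1 w) => z hs.
all: have -> : e1 = (q + q^-1) * z - e2 by rewrite -hs; ring.
all: rewrite ?qm2 ?qp2 exprS; split.
all: clearbody e1 e2; move: ((q + q^-1)^+m) => y; rewrite ?invrK; by field.
Qed.
End Main.


Arguments G : simpl never.
Arguments Gt : simpl never.
Arguments Wm : simpl never.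
Arguments Wp : simpl never.

Lemma sig_G k : sig (G k) = Gt k. Proof. by rewrite /G /Gt sig_alt. Qed.
Lemma sig_Gt k : sig (Gt k) = G k. Proof. by rewrite /G /Gt sig_alt. Qed.
Lemma sig_Wm k : sig (Wm k) = Wp k.+1.
Proof. by rewrite /Wm /Wp sig_alt doubleS. Qed.
Lemma sig_Wp k : sig (Wp k.+1) = Wm k.
Proof. by rewrite /Wm /Wp sig_alt doubleS. Qed.
Lemma sigK w : sig (sig w) = w.
Proof. by rewrite /sig -map_comp map_id_in // => b _ /=; rewrite negbK. Qed.

Section Final.
Variable F : fieldType.
Variable q : F.
Hypothesis hq0 : q != 0.

Lemma coef_sh u v w : coef (vshuffle q (vword F u) (vword F v)) w = S q u v w.
Proof.
rewrite /vshuffle /vword /= cats0 coef_scale mulr1 mul1r //.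
Qed.

Lemma S_swap u v w : S q u v w = S q (sig u) (sig v) (sig w).
Proof. by rewrite S_sig. Qed.

Lemma L1A n w : coef (vsum n.+1 (fun k => vscale (q ^ (n%:Z - (2 * k)%:Z))
   (vshuffle q (vword F (G k)) (vword F (Gt (n - k)))))) w = GA F q q n w.
Proof.
by rewrite coef_vsum /GA; apply: eq_bigr => k _; rewrite coef_scale coef_sh.
Qed.

Lemma qqz (z : int) : q * q * q ^ z = q ^ (2%:Z + z).
Proof. by rewrite expfzDr. Qed.
Lemma qz1 (z : int) : q * q ^ z = q ^ (1 + z).
Proof. by rewrite expfzDr // expr1z. Qed.

Lemma L1B n w : coef (vscale q (vsum n (fun k => vscale (q ^ (n%:Z - 1 - (2 * k)%:Z))
   (vshuffle q (vword F (Wm k)) (vword F (Wp (n - k))))))) w = GB F q q n w.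
Proof.
rewrite coef_scale coef_vsum /GB mulr_sumr; apply: eq_bigr => k _.
rewrite coef_scale coef_sh mulrA -{1}(expr1z q) -expfzDr //; congr (q ^ _ * _); lia.
Qed.

Lemma L2A n w : coef (vsum n.+1 (fun k => vscale (q ^ ((2 * k)%:Z - n%:Z))
   (vshuffle q (vword F (G k)) (vword F (Gt (n - k)))))) w = GA F q q^-1 n w.
Proof.
rewrite coef_vsum /GA; apply: eq_bigr => k _; rewrite coef_scale coef_sh exprz_inv.
congr (q ^ _ * _); lia.
Qed.

Lemma L4B n w : coef (vscale q (vsum n (fun k => vscale (q ^ ((2 * k)%:Z + 1 - n%:Z))
   (vshuffle q (vword F (Wm k)) (vword F (Wp (n - k))))))) w = q * q * GB F q q^-1 n w.
Proof.
rewrite coef_scale coef_vsum /GB !mulr_sumr; apply: eq_bigr => k _.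
rewrite coef_scale coef_sh exprz_inv !mulrA qqz qz1.
congr (q ^ _ * _); lia.
Qed.

Lemma L3A n w : coef (vsum n.+1 (fun k => vscale (q ^ (n%:Z - (2 * k)%:Z))
   (vshuffle q (vword F (Gt k)) (vword F (G (n - k)))))) w = GA F q q n (sig w).
Proof.
rewrite coef_vsum /GA; apply: eq_bigr => k _.
by rewrite coef_scale coef_sh S_swap sig_G sig_Gt.
Qed.

Lemma L4A n w : coef (vsum n.+1 (fun k => vscale (q ^ ((2 * k)%:Z - n%:Z))
   (vshuffle q (vword F (Gt k)) (vword F (G (n - k)))))) w = GA F q q^-1 n (sig w).
Proof.
rewrite coef_vsum /GA; apply: eq_bigr => k _; rewrite coef_scale coef_sh exprz_inv.
rewrite S_swap sig_G sig_Gt; congr (q ^ _ * _); lia.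
Qed.

Lemma L2B n w : coef (vscale q (vsum n (fun k => vscale (q ^ (n%:Z - 1 - (2 * k)%:Z))
   (vshuffle q (vword F (Wp (n - k))) (vword F (Wm k)))))) w = q * q * GB F q q^-1 n (sig w).
Proof.
rewrite coef_scale coef_vsum /GB big_nat_rev !mulr_sumr; apply: eq_big_nat => k /andP[_ hk].
rewrite add0n coef_scale coef_sh (subKn hk) S_swap sig_Wp sig_Wm subnSK // exprz_inv.
rewrite !mulrA qqz qz1.
congr (q ^ _ * _); lia.
Qed.

Lemma L3B n w : coef (vscale q (vsum n (fun k => vscale (q ^ ((2 * k)%:Z + 1 - n%:Z))
   (vshuffle q (vword F (Wp (n - k))) (vword F (Wm k)))))) w = GB F q q n (sig w).
Proof.
rewrite coef_scale coef_vsum /GB big_nat_rev !mulr_sumr; apply: eq_big_nat => k /andP[_ hk].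
rewrite add0n coef_scale coef_sh (subKn hk) S_swap sig_Wp sig_Wm subnSK //.
rewrite !mulrA -{1}(expr1z q) -expfzDr //.
congr (q ^ _ * _); lia.
Qed.
End Final.


Theorem proposition12p6 (F : fieldType) (q : F)
  (hq0 : q != 0) (hq : forall m : nat, (0 < m)%N -> q ^+ m != 1)
  (n : nat) (hn : (1 <= n)%N) :
  let sh := vshuffle q in
  let R := vscale (qint q 2 ^+ (n - 1)) in
  (* line 1 *)
  (eqV (vsum n.+1 (fun k => vscale (q ^ (n%:Z - (2 * k)%:Z)) (sh (vword F (G k)) (vword F (Gt (n - k))))))
       (vscale q (vsum n (fun k => vscale (q ^ (n%:Z - 1 - (2 * k)%:Z)) (sh (vword F (Wm k)) (vword F (Wp (n - k))))))) /\
   eqV (vscale q (vsum n (fun k => vscale (q ^ (n%:Z - 1 - (2 * k)%:Z)) (sh (vword F (Wm k)) (vword F (Wp (n - k)))))))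
       (R (vconcat (vpow (vxyyx F) (n - 1)) (vlin q q^-1)))) /\
  (* line 2 *)
  (eqV (vsum n.+1 (fun k => vscale (q ^ ((2 * k)%:Z - n%:Z)) (sh (vword F (G k)) (vword F (Gt (n - k))))))
       (vscale q (vsum n (fun k => vscale (q ^ (n%:Z - 1 - (2 * k)%:Z)) (sh (vword F (Wp (n - k))) (vword F (Wm k)))))) /\
   eqV (vscale q (vsum n (fun k => vscale (q ^ (n%:Z - 1 - (2 * k)%:Z)) (sh (vword F (Wp (n - k))) (vword F (Wm k))))))
       (R (vconcat (vlin q^-1 q) (vpow (vxyyx F) (n - 1))))) /\
  (* line 3 *)
  (eqV (vsum n.+1 (fun k => vscale (q ^ (n%:Z - (2 * k)%:Z)) (sh (vword F (Gt k)) (vword F (G (n - k))))))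
       (vscale q (vsum n (fun k => vscale (q ^ ((2 * k)%:Z + 1 - n%:Z)) (sh (vword F (Wp (n - k))) (vword F (Wm k)))))) /\
   eqV (vscale q (vsum n (fun k => vscale (q ^ ((2 * k)%:Z + 1 - n%:Z)) (sh (vword F (Wp (n - k))) (vword F (Wm k))))))
       (R (vconcat (vpow (vxyyx F) (n - 1)) (vlin q^-1 q)))) /\
  (* line 4 *)
  (eqV (vsum n.+1 (fun k => vscale (q ^ ((2 * k)%:Z - n%:Z)) (sh (vword F (Gt k)) (vword F (G (n - k))))))
       (vscale q (vsum n (fun k => vscale (q ^ ((2 * k)%:Z + 1 - n%:Z)) (sh (vword F (Wm k)) (vword F (Wp (n - k))))))) /\
   eqV (vscale q (vsum n (fun k => vscale (q ^ ((2 * k)%:Z + 1 - n%:Z)) (sh (vword F (Wm k)) (vword F (Wp (n - k)))))))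
       (R (vconcat (vlin q q^-1) (vpow (vxyyx F) (n - 1))))).
Proof.
rewrite /=.
case: n hn => [|m] // _.
have -> : (m.+1 - 1 = m)%N by rewrite subn1.
have h2 := @qint2 F q hq0 (hq 2%N isT).
rewrite /eqV; split; [|split; [|split]]; split => w.
- by rewrite L1A L1B //; case: (@line1 F q hq0 m w) => -> ->.
- rewrite L1B // coef_scale h2; case: (@line1 F q hq0 m w) => _ ->; by [].
- rewrite L2A // L2B //; case: (@line24 F q hq0 m w) => -> _; case: (@line24 F q hq0 m (sig w)) => _ ->.
  by rewrite /T2 /T4 LP_sig.
- rewrite L2B // coef_scale h2; case: (@line24 F q hq0 m (sig w)) => _ ->.
  by rewrite /T2 /T4 LP_sig.
- by rewrite L3A // L3B //; case: (@line1 F q hq0 m (sig w)) => -> ->.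
- rewrite L3B // coef_scale h2; case: (@line1 F q hq0 m (sig w)) => _ ->.
  by rewrite /T1 Q_sig.
- rewrite L4A // L4B //; case: (@line24 F q hq0 m w) => _ ->; case: (@line24 F q hq0 m (sig w)) => -> _.
  by rewrite /T2 /T4 LP_sig.
- rewrite L4B // coef_scale h2; case: (@line24 F q hq0 m w) => _ ->; by [].
Qed.
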